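(* Let $E$ and $F$ be locally convex spaces over $K$ and let $A\subseteq E$ be a c-precompact set. Then: (1) for every continuous linear map $f:E\to F$, the set $f(A)$ is c-precompact in $F$; (2) the closure $\overline{A}$ of $A$ in $E$ is c-precompact.
   Context: $K$ is a field complete with respect to a non-trivial non-archimedean absolute value $|\cdot|$, with $B_K=\{x\in K:|x|\le 1\}$. A locally convex space over $K$ is a topological $K$-vector space whose topology is defined by a family of non-archimedean seminorms. A subset $A$ is absolutely convex if it is a $B_K$-submodule; a set is convex if it has the form $x+A$ with $A$ absolutely convex. For an absolutely convex set $A$, a convex filter on $A$ is a filter on $A$ having a base consisting of convex sets; a maximal convex filter on $A$ is a convex filter on $A$ not properly contained in any other convex filter on $A$. A filter $\mathcal F$ on $A$ is Cauchy if for every zero neighbourhood $U$ of $E$ there is $X\in\mathcal F$ with $X-X\subseteq U$. An absolutely convex set $A$ is c-precompact if every maximal convex filter on $A$ is a Cauchy filter. *)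

(* Defs.v *)
From HB Require Import structures.
From mathcomp Require Import all_boot all_order all_algebra.
From mathcomp Require Import boolp classical_sets reals.
From Stdlib Require Lists.List.
Set Implicit Arguments. Unset Strict Implicit. Unset Printing Implicit Defensive.
Import Order.TTheory GRing.Theory Num.Theory.
Local Open Scope ring_scope.
Local Open Scope classical_set_scope.

Definition nonarch_abs {R : realType} {K : fieldType} (abs : K -> R) : Prop :=
  [/\ forall x, 0 <= abs x,
      forall x, abs x = 0 <-> x = 0,
      forall x y, abs (x * y) = abs x * abs y &
      forall x y, abs (x + y) <= Num.max (abs x) (abs y)].

Definition nontrivial_abs {R : realType} {K : fieldType} (abs : K -> R) : Prop :=
  exists x, abs x != 0 /\ abs x != 1.

Definition complete_abs {R : realType} {K : fieldType} (abs : K -> R) : Prop :=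
  forall u : nat -> K,
    (forall e : R, 0 < e -> exists N : nat, forall m n : nat,
        (N <= m)%N -> (N <= n)%N -> abs (u m - u n) < e) ->
    exists l : K, forall e : R, 0 < e -> exists N : nat, forall n : nat,
        (N <= n)%N -> abs (u n - l) < e.

Definition nonarch_seminorm {R : realType} {K : fieldType} (abs : K -> R)
  (E : lmodType K) (p : E -> R) : Prop :=
  [/\ forall x, 0 <= p x,
      forall x y, p (x + y) <= Num.max (p x) (p y) &
      forall (a : K) x, p (a *: x) = abs a * p x].

(* Zero neighbourhoods of the locally convex topology defined by the
   family of seminorms p : I -> E -> R. *)
Definition na_zero_nbhd {R : realType} {K : fieldType} {E : lmodType K} {I : Type}
  (p : I -> E -> R) (U : set E) : Prop :=
  exists (s : seq I) (e : R), 0 < e /\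
    forall x, (forall i, Stdlib.Lists.List.In i s -> p i x < e) -> U x.

(* Absolutely convex = B_K-submodule. *)
Definition na_absconvex {R : realType} {K : fieldType} (abs : K -> R)
  {E : lmodType K} (A : set E) : Prop :=
  [/\ A 0,
      forall x y, A x -> A y -> A (x + y) &
      forall (a : K) x, abs a <= 1 -> A x -> A (a *: x)].

Definition na_convex {R : realType} {K : fieldType} (abs : K -> R)
  {E : lmodType K} (X : set E) : Prop :=
  exists (x : E) (A : set E), na_absconvex abs A /\ X = (fun y => x + y) @` A.

Definition na_filter_on {E : Type} (A : set E) (Fl : set (set E)) : Prop :=
  [/\ Fl A,
      forall X, Fl X -> X `<=` A,
      ~ Fl set0,
      forall X Y, Fl X -> Fl Y -> Fl (X `&` Y) &
      forall X Y, Fl X -> X `<=` Y -> Y `<=` A -> Fl Y].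

Definition na_convex_filter {R : realType} {K : fieldType} (abs : K -> R)
  {E : lmodType K} (A : set E) (Fl : set (set E)) : Prop :=
  na_filter_on A Fl /\
  forall X, Fl X -> exists2 C, Fl C /\ na_convex abs C & C `<=` X.

Definition na_max_convex_filter {R : realType} {K : fieldType} (abs : K -> R)
  {E : lmodType K} (A : set E) (Fl : set (set E)) : Prop :=
  na_convex_filter abs A Fl /\
  forall G, na_convex_filter abs A G -> Fl `<=` G -> G = Fl.

Definition na_cauchy {R : realType} {K : fieldType} {E : lmodType K} {I : Type}
  (p : I -> E -> R) (Fl : set (set E)) : Prop :=
  forall U, na_zero_nbhd p U ->
    exists2 X, Fl X & forall x y, X x -> X y -> U (x - y).

Definition c_precompact {R : realType} {K : fieldType} (abs : K -> R)
  {E : lmodType K} {I : Type} (p : I -> E -> R) (A : set E) : Prop :=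
  na_absconvex abs A /\
  forall Fl, na_max_convex_filter abs A Fl -> na_cauchy p Fl.

Definition na_closure {R : realType} {K : fieldType} {E : lmodType K} {I : Type}
  (p : I -> E -> R) (A : set E) : set E :=
  fun x => forall U, na_zero_nbhd p U -> exists2 a, A a & U (a - x).

Definition na_continuous {R : realType} {K : fieldType} {E F : lmodType K}
  {IE IF : Type} (pE : IE -> E -> R) (pF : IF -> F -> R) (f : E -> F) : Prop :=
  forall x V, na_zero_nbhd pF V ->
    exists2 U, na_zero_nbhd pE U & forall y, U (y - x) -> V (f y - f x).

(* Main.v *)
Require Import Defs.
From HB Require Import structures.
From mathcomp Require Import all_boot all_order all_algebra.
From mathcomp Require Import boolp classical_sets reals.
From mathcomp Require Import ring.
From Stdlib Require Lists.List.
Import Order.TTheory GRing.Theory Num.Theory.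
Local Open Scope ring_scope.
Local Open Scope classical_set_scope.

Lemma abs0 {R : realType} {K : fieldType} {abs : K -> R} :
  nonarch_abs abs -> abs 0 = 0.
Proof. by case=> _ h _ _; apply/h. Qed.

Lemma abs1 {R : realType} {K : fieldType} {abs : K -> R} :
  nonarch_abs abs -> abs 1 = 1.
Proof.
case=> h0 h1 hM _.
have e := hM 1 1; rewrite mulr1 in e.
have nz : abs 1 != 0 by apply/eqP => /h1 /eqP; rewrite oner_eq0.
by apply: (mulfI nz); rewrite mulr1 -e.
Qed.

Lemma absN1 {R : realType} {K : fieldType} {abs : K -> R} :
  nonarch_abs abs -> abs (-1) = 1.
Proof.
move=> h; have a1 := abs1 h; case: h => h0 h1 hM _.
have e := hM (-1) (-1); rewrite mulrNN mulr1 a1 in e.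
have p := h0 (-1).
have : (abs (-1) - 1) * (abs (-1) + 1) = 0.
  by rewrite mulrDr mulrBl mulr1 mul1r -e; ring.
move/eqP; rewrite mulf_eq0 => /orP[]; first by rewrite subr_eq0 => /eqP.
move=> /eqP h; exfalso; have : 0 < abs (-1) + 1 by apply: ltr_wpDl.
by rewrite h ltxx.
Qed.

Definition ball {R : realType} {K : fieldType} {E : lmodType K} {I : Type}
  (p : I -> E -> R) (s : seq I) (e : R) : set E :=
  fun x => forall i, Stdlib.Lists.List.In i s -> p i x < e.


Lemma sn0 {R : realType} {K : fieldType} {abs : K -> R} {E : lmodType K} {p : E -> R} :
  nonarch_abs abs -> nonarch_seminorm abs p -> p 0 = 0.
Proof. by move=> ha [_ _ hZ]; rewrite -(scale0r 0) hZ (abs0 ha) mul0r. Qed.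

Lemma snN {R : realType} {K : fieldType} {abs : K -> R} {E : lmodType K} {p : E -> R} {x} :
  nonarch_abs abs -> nonarch_seminorm abs p -> p (- x) = p x.
Proof. by move=> ha [_ _ hZ]; rewrite -scaleN1r hZ (absN1 ha) mul1r. Qed.

Lemma snZ {R : realType} {K : fieldType} {abs : K -> R} {E : lmodType K} {p : E -> R} {c x} :
  nonarch_abs abs -> nonarch_seminorm abs p -> abs c <= 1 -> p (c *: x) <= p x.
Proof. move=> ha [h0 _ hZ] hc; rewrite hZ; apply: ler_piMl => //. Qed.

Lemma snD {R : realType} {K : fieldType} {abs : K -> R} {E : lmodType K} {p : E -> R} {x y e} :
  nonarch_seminorm abs p -> p x < e -> p y < e -> p (x + y) < e.
Proof. by move=> [_ hD _] hx hy; apply: le_lt_trans (hD x y) _; rewrite gt_max hx hy. Qed.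

Definition allsn {R : realType} {K : fieldType} (abs : K -> R) {E : lmodType K} {I : Type}
  (p : I -> E -> R) := nonarch_abs abs /\ forall i, nonarch_seminorm abs (p i).

Lemma ball_nbhd {R : realType} {K : fieldType} {E : lmodType K} {I : Type}
  (p : I -> E -> R) s e : 0 < e -> na_zero_nbhd p (ball p s e).
Proof. by move=> he; exists s, e; split. Qed.

Lemma ball0 {R : realType} {K : fieldType} {abs : K -> R} {E : lmodType K} {I : Type}
  {p : I -> E -> R} s e : allsn abs p -> 0 < e -> ball p s e 0.
Proof. by move=> [ha hp] he i _; rewrite (sn0 ha (hp i)). Qed.

Lemma ballD {R : realType} {K : fieldType} {abs : K -> R} {E : lmodType K} {I : Type}
  {p : I -> E -> R} {s e x y} : allsn abs p -> ball p s e x -> ball p s e y -> ball p s e (x + y).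
Proof. by move=> [ha hp] hx hy i hi; apply: (snD (hp i)); [apply: hx|apply: hy]. Qed.

Lemma ballZ {R : realType} {K : fieldType} {abs : K -> R} {E : lmodType K} {I : Type}
  {p : I -> E -> R} {s e c x} : allsn abs p -> abs c <= 1 -> ball p s e x -> ball p s e (c *: x).
Proof. by move=> [ha hp] hc hx i hi; apply: le_lt_trans (snZ ha (hp i) hc) (hx i hi). Qed.

Lemma ballN {R : realType} {K : fieldType} {abs : K -> R} {E : lmodType K} {I : Type}
  {p : I -> E -> R} {s e x} : allsn abs p -> ball p s e x -> ball p s e (- x).
Proof. by move=> [ha hp] hx i hi; rewrite (snN ha (hp i)); apply: hx. Qed.

Lemma ballB {R : realType} {K : fieldType} {abs : K -> R} {E : lmodType K} {I : Type}
  {p : I -> E -> R} {s e x y} : allsn abs p -> ball p s e x -> ball p s e y -> ball p s e (x - y).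
Proof. by move=> h hx hy; apply: (ballD h hx); apply: (ballN h). Qed.

Lemma ball_abs {R : realType} {K : fieldType} {abs : K -> R} {E : lmodType K} {I : Type}
  {p : I -> E -> R} s e : allsn abs p -> 0 < e -> na_absconvex abs (ball p s e).
Proof.
move=> h he; split; first exact: (ball0 _ _ h he).
- by move=> x y; apply: (ballD h).
- by move=> c x; apply: (ballZ h).
Qed.

Lemma ball_cat {R : realType} {K : fieldType} {E : lmodType K} {I : Type}
  (p : I -> E -> R) s1 s2 e1 e2 x : ball p (s1 ++ s2) (Num.min e1 e2) x ->
  ball p s1 e1 x /\ ball p s2 e2 x.
Proof.
move=> h; split => i hi.
- have hi' : Stdlib.Lists.List.In i (s1 ++ s2) by apply: Stdlib.Lists.List.in_or_app; left.
  by apply: lt_le_trans (h i hi') _; rewrite ge_min lexx.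
- have hi' : Stdlib.Lists.List.In i (s1 ++ s2) by apply: Stdlib.Lists.List.in_or_app; right.
  by apply: lt_le_trans (h i hi') _; rewrite ge_min lexx orbT.
Qed.

Lemma nbhd_ball {R : realType} {K : fieldType} {E : lmodType K} {I : Type}
  (p : I -> E -> R) U : na_zero_nbhd p U -> exists s e, 0 < e /\ ball p s e `<=` U.
Proof. by move=> [s [e [he h]]]; exists s, e; split. Qed.

Lemma ac0 {R : realType} {K : fieldType} {abs : K -> R} {E : lmodType K} (B : set E) :
  na_absconvex abs B -> B 0.
Proof. by case. Qed.

Lemma acD {R : realType} {K : fieldType} {abs : K -> R} {E : lmodType K} {B : set E} {x y} :
  na_absconvex abs B -> B x -> B y -> B (x + y).
Proof. by case=> _ h _; apply: h. Qed.

Lemma acN {R : realType} {K : fieldType} {abs : K -> R} {E : lmodType K} {B : set E} {x} :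
  nonarch_abs abs -> na_absconvex abs B -> B x -> B (- x).
Proof. by move=> ha [_ _ h] hx; rewrite -scaleN1r; apply: h => //; rewrite (absN1 ha). Qed.

Lemma acB {R : realType} {K : fieldType} {abs : K -> R} {E : lmodType K} {B : set E} {x y} :
  nonarch_abs abs -> na_absconvex abs B -> B x -> B y -> B (x - y).
Proof. by move=> ha hB hx hy; apply: (acD hB hx); apply: (acN ha hB). Qed.

Lemma acI {R : realType} {K : fieldType} {abs : K -> R} {E : lmodType K} (B1 B2 : set E) :
  na_absconvex abs B1 -> na_absconvex abs B2 -> na_absconvex abs (B1 `&` B2).
Proof.
move=> [a1 b1 c1] [a2 b2 c2]; split => //.
- by move=> x y [? ?] [? ?]; split; [apply: b1|apply: b2].
- by move=> c x hc [? ?]; split; [apply: c1|apply: c2].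
Qed.

Definition splus {K : fieldType} {E : lmodType K} (B1 B2 : set E) : set E :=
  fun x => exists b1 b2, B1 b1 /\ B2 b2 /\ x = b1 + b2.

Lemma acplus {R : realType} {K : fieldType} {abs : K -> R} {E : lmodType K} (B1 B2 : set E) :
  na_absconvex abs B1 -> na_absconvex abs B2 -> na_absconvex abs (splus B1 B2).
Proof.
move=> [a1 b1 c1] [a2 b2 c2]; split.
- by exists 0, 0; rewrite addr0.
- move=> x y [x1 [x2 [h1 [h2 ->]]]] [y1 [y2 [k1 [k2 ->]]]].
  exists (x1 + y1), (x2 + y2); split; first by apply: b1.
  by split; [apply: b2|rewrite addrACA].
- move=> c x hc [x1 [x2 [h1 [h2 ->]]]]; exists (c *: x1), (c *: x2).
  split; first by apply: c1.
  by split; [apply: c2|rewrite scalerDr].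
Qed.

Definition cv {K : fieldType} {E : lmodType K} (B : set E) (z : E) : set E :=
  fun y => B (y - z).

Lemma cv_convex {R : realType} {K : fieldType} {abs : K -> R} {E : lmodType K} (B : set E) z :
  na_absconvex abs B -> na_convex abs (cv B z).
Proof.
move=> hB; exists z, B; split => //; apply/seteqP; split => y.
- by rewrite /cv => hy; exists (y - z) => //; rewrite addrC subrK.
- by move=> [b hb <-]; rewrite /cv (addrC z) addrK.
Qed.

Lemma convex_cv {R : realType} {K : fieldType} {abs : K -> R} {E : lmodType K} {X : set E} :
  na_convex abs X -> exists B z, na_absconvex abs B /\ X = cv B z.
Proof.
move=> [z [B [hB ->]]]; exists B, z; split => //; apply/seteqP; split => y.
- by move=> [b hb <-]; rewrite /cv (addrC z) addrK.
- by rewrite /cv => hy; exists (y - z) => //; rewrite addrC subrK.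
Qed.

Lemma cv_shift {R : realType} {K : fieldType} {abs : K -> R} {E : lmodType K} (B : set E) z z1 :
  nonarch_abs abs -> na_absconvex abs B -> cv B z1 z -> cv B z1 = cv B z.
Proof.
rewrite /cv => ha hB hz; apply/seteqP; split => y hy.
- by have := acB ha hB hy hz; rewrite opprB addrA subrK.
- by have := acD hB hy hz; rewrite addrA subrK.
Qed.

Lemma cvI_convex {R : realType} {K : fieldType} {abs : K -> R} {E : lmodType K}
  (B1 B2 : set E) z1 z2 z : nonarch_abs abs -> na_absconvex abs B1 -> na_absconvex abs B2 ->
  (cv B1 z1 `&` cv B2 z2) z -> na_convex abs (cv B1 z1 `&` cv B2 z2).
Proof.
move=> ha h1 h2 [k1 k2].
rewrite (cv_shift _ _ _ ha h1 k1) (cv_shift _ _ _ ha h2 k2).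
have -> : cv B1 z `&` cv B2 z = cv (B1 `&` B2) z by [].
by apply: cv_convex; apply: acI.
Qed.

Lemma zorn_cf {R : realType} {K : fieldType} {abs : K -> R} {E : lmodType K}
  (A : set E) (H : set (set E)) : na_convex_filter abs A H ->
  exists H', na_max_convex_filter abs A H' /\ H `<=` H'.
Proof.
move=> hH.
pose P := fun G : set (set E) => (na_convex_filter abs A G /\ H `<=` G) \/ G = set0.
have memF : forall (F : set (set (set E))) G X, F `<=` P -> F G -> G X ->
    na_convex_filter abs A G /\ H `<=` G.
  move=> F G X FP FG GX; case: (FP G FG) => // G0; by rewrite G0 in GX.
have [M [PM Mmax]] : exists M, P M /\ forall B, M `<` B -> ~ P B.
  apply: Zorn_bigcup => F FP Ftot.
  have [[G0 FG0 [X0 G0X0]]|none] :=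
     pselect (exists2 G, F G & exists X, G X).
  - left; have [[[fA fsub f0 fI fU] fC] HG0] := memF F G0 X0 FP FG0 G0X0.
    split; last by move=> X HX; exists G0 => //; apply: HG0.
    split; first split.
    + by exists G0.
    + move=> X [G FG GX]; have [[[_ h _ _ _] _] _] := memF F G X FP FG GX; exact: h.
    + move=> [G FG GX]; have [[[_ _ h _ _] _] _] := memF F G _ FP FG GX; exact: h.
    + move=> X Y [G1 FG1 G1X] [G2 FG2 G2Y].
      have [[[_ _ _ h1 _] _] _] := memF F G1 X FP FG1 G1X.
      have [[[_ _ _ h2 _] _] _] := memF F G2 Y FP FG2 G2Y.
      case: (Ftot G1 G2 FG1 FG2) => sub.
      * by exists G2 => //; apply: h2 => //; apply: sub.
      * by exists G1 => //; apply: h1 => //; apply: sub.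
    + move=> X Y [G FG GX] XY YA; have [[[_ _ _ _ h] _] _] := memF F G X FP FG GX.
      by exists G => //; apply: h GX XY YA.
    + move=> X [G FG GX]; have [[_ h] _] := memF F G X FP FG GX.
      have [C [GC cC] CX] := h X GX; exists C => //; split => //; by exists G.
  - rewrite /P; right; apply/seteqP; split => [X [G FG GX]|X] //; apply: none; exists G => //; by exists X.
have HA : H A by case: hH => -[]. 
case: PM => [[cM HM]|M0].
- exists M; split => //; split => // G cG MG.
  rewrite eqEsubset; split => //; apply: contrapT => GM.
  by apply: (Mmax G) => //; left; split => //; apply: subset_trans MG.
- exfalso; apply: (Mmax H); last by rewrite /P; left; split.
  by rewrite M0; split => [X []|/(_ A HA)].
Qed.

Lemma filt_ne {E : Type} {A : set E} {Fl : set (set E)} {C} :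
  na_filter_on A Fl -> Fl C -> exists c, C c.
Proof.
move=> [_ _ h0 _ _] FC; apply: contrapT => hn; apply: h0.
suff <- : C = set0 by [].
by apply/seteqP; split => // x Cx; apply: hn; exists x.
Qed.

Lemma ac_preim {R : realType} {K : fieldType} {abs : K -> R} {E F : lmodType K}
  (f : {linear E -> F}) (B : set F) :
  na_absconvex abs B -> na_absconvex abs (fun x => B (f x)).
Proof.
move=> [a b c]; split.
- by rewrite linear0.
- by move=> x y hx hy; rewrite linearD; apply: b.
- by move=> k x hk hx; rewrite linearZ; apply: c.
Qed.

Lemma ac_image {R : realType} {K : fieldType} {abs : K -> R} {E F : lmodType K}
  (f : {linear E -> F}) (B : set E) :
  na_absconvex abs B -> na_absconvex abs (f @` B).
Proof.
move=> [a b c]; split.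
- by exists 0 => //; rewrite linear0.
- by move=> _ _ [x hx <-] [y hy <-]; exists (x + y); [apply: b|rewrite linearD].
- by move=> k _ hk [x hx <-]; exists (k *: x); [apply: c|rewrite linearZ].
Qed.

Lemma image_cv {K : fieldType} {E F : lmodType K}
  (f : {linear E -> F}) (B : set E) z : f @` cv B z = cv (f @` B) (f z).
Proof.
apply/seteqP; split.
- by move=> _ [x hx <-]; exists (x - z) => //; rewrite linearB.
- move=> y [b hb e]; exists (z + b); first by rewrite /cv (addrC z) addrK.
  by rewrite linearD e addrC subrK.
Qed.

Lemma part1 {R : realType} {K : fieldType} {abs : K -> R} {E F : lmodType K} {IE IF : Type}
  (pE : IE -> E -> R) (pF : IF -> F -> R) (A : set E) :
  nonarch_abs abs -> c_precompact abs pE A ->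
  forall f : {linear E -> F}, na_continuous pE pF f -> c_precompact abs pF (f @` A).
Proof.
move=> ha [hAc hAp] f hf.
have fAc : na_absconvex abs (f @` A) by apply: ac_image.
split => // Fl [[hFl fC] fmax].
have [fA_in fsub f0 fI fU] := hFl.
pose H := fun X => X `<=` A /\ exists2 C, Fl C & (A `&` (f @^-1` C)) `<=` X.
have Hne : forall Y, H Y -> exists y, Y y.
  move=> Y [_ [C FC s]]; have [c Cc] := filt_ne hFl FC.
  have [a Aa fac] := fsub C FC c Cc; exists a; apply: s; split => //.
  by move: Cc; rewrite -fac.
have hH : na_convex_filter abs A H.
  split; first split.
  - by split => //; exists (f @` A) => // x [].
  - by move=> X [].
  - by move=> /Hne [].
  - move=> X Y [XA [C1 F1 s1]] [YA [C2 F2 s2]]; split.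
      by move=> x [/XA].
    exists (C1 `&` C2); first exact: fI.
    by move=> x [Ax [c1 c2]]; split; [apply: s1|apply: s2].
  - move=> X Y [XA [C FC s]] XY YA; split => //; exists C => //.
    exact: subset_trans XY.
  - move=> X [XA [C FC s]].
    have [C' [FC' cC'] C'C] := fC C FC.
    have [B [z [hB eC']]] := convex_cv cC'.
    have HY : H (A `&` f @^-1` C').
      split; first by move=> x [].
      by exists C'.
    exists (A `&` f @^-1` C'); last first.
      by move=> x [Ax /C'C hx]; apply: s.
    split => //.
    have [y0 [Ay0 Cy0]] := Hne _ HY.
    rewrite eC' in Cy0 *.
    rewrite (cv_shift _ _ _ ha hB Cy0).
    have -> : A `&` f @^-1` cv B (f y0) = cv A 0 `&` cv (fun x => B (f x)) y0.
      apply/seteqP; split => y [h1 h2]; split; move: h1 h2;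
        by rewrite /cv /preimage ?subr0 ?linearB.
    apply: (cvI_convex _ _ _ _ y0 ha hAc (ac_preim f _ hB)).
    by split; rewrite /cv ?subr0 ?subrr ?linear0 //; case: hB.
have [H' [[hH' H'max] HH']] := zorn_cf A H hH.
have H'cauchy := hAp H' (conj hH' H'max).
have [[H'A H'sub H'0 H'I H'U] H'C] := hH'.
pose G := fun Y => Y `<=` f @` A /\ exists2 X, H' X & f @` X `<=` Y.
have hG : na_convex_filter abs (f @` A) G.
  split; first split.
  - by split => //; exists A.
  - by move=> X [].
  - move=> [_ [X HX s]]; have [x Xx] := filt_ne (proj1 hH') HX.
    by have := s (f x); apply; exists x.
  - move=> X Y [XA [X1 H1 s1]] [YA [X2 H2 s2]]; split.
      by move=> x [/XA].
    exists (X1 `&` X2); first exact: H'I.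
    by move=> _ [x [x1 x2] <-]; split; [apply: s1|apply: s2]; exists x.
  - move=> X Y [XA [X1 H1 s]] XY YA; split => //; exists X1 => //.
    exact: subset_trans XY.
  - move=> Y [YA [X HX s]].
    have [X' [HX' cX'] X'X] := H'C X HX.
    have [B [z [hB eX']]] := convex_cv cX'.
    exists (f @` X'); last first.
      by move=> _ [x /X'X hx <-]; apply: s; exists x.
    split.
    + split; last by exists X'.
      by move=> _ [x /(H'sub _ HX') hx <-]; exists x.
    + by rewrite eX' image_cv; apply: cv_convex; apply: ac_image.
have FlG : Fl `<=` G.
  move=> C FC; split; first exact: fsub.
  exists (A `&` f @^-1` C); last by move=> _ [x [_ hx] <-].
  apply: HH'; split; first by move=> x [].
  by exists C.
have eG := fmax G hG FlG.
move=> U hU.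
have [V hV hVU] := hf 0 U hU.
have [X HX hXV] := H'cauchy V hV.
exists (f @` X).
  by rewrite -eG; split; [move=> _ [x /(H'sub _ HX) hx <-]; exists x | exists X].
move=> _ _ [x Xx <-] [y Xy <-].
have := hVU (x - y); rewrite subr0 linear0 subr0 linearB; apply.
exact: hXV.
Qed.

Lemma splus_cv {K : fieldType} {E : lmodType K} (B W : set E) z :
  splus (cv B z) W = cv (splus B W) z.
Proof.
apply/seteqP; split.
- move=> _ [c [w [hc [hw ->]]]]; exists (c - z), w; split => //; split => //.
  by rewrite addrAC.
- move=> y [b [w [hb [hw e]]]]; exists (z + b), w; split.
    by rewrite /cv (addrC z) addrK.
  split => //; by rewrite -addrA -e addrC subrK.
Qed.

Lemma cv0 {K : fieldType} {E : lmodType K} (A : set E) : cv A 0 = A.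
Proof. by apply/seteqP; split => y; rewrite /cv subr0. Qed.

Lemma part2 {R : realType} {K : fieldType} {abs : K -> R} {E : lmodType K} {IE : Type}
  (pE : IE -> E -> R) (A : set E) :
  allsn abs pE -> c_precompact abs pE A -> c_precompact abs pE (na_closure pE A).
Proof.
move=> hs [hAc hAp]; have ha := hs.1.
set cA := na_closure pE A.
have cAc : na_absconvex abs cA.
  split.
  - move=> U /nbhd_ball [s [e [he sU]]]; exists 0; first exact: ac0 hAc.
    by apply: sU; rewrite subr0; exact: (ball0 s e hs he).
  - move=> x y hx hy U /nbhd_ball [s [e [he sU]]].
    have [a Aa ha'] := hx _ (ball_nbhd pE s e he).
    have [b Ab hb] := hy _ (ball_nbhd pE s e he).
    exists (a + b); first exact: acD hAc Aa Ab.
    apply: sU; rewrite opprD addrACA; exact: ballD hs ha' hb.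
  - move=> c x hc hx U /nbhd_ball [s [e [he sU]]].
    have [a Aa ha'] := hx _ (ball_nbhd pE s e he).
    exists (c *: a); first by case: hAc => _ _ h; apply: h.
    by apply: sU; rewrite -scalerBr; exact: (ballZ hs hc ha').
split => // Fl [[hFl fC] fmax].
have [fA_in fsub f0 fI fU] := hFl.
pose bl s e := ball pE s e.
pose H := fun X => X `<=` A /\ exists s e C, [/\ Fl C, 0 < e & (A `&` splus C (bl s e)) `<=` X].
have Hne : forall Y, H Y -> exists y, Y y.
  move=> Y [_ [s [e [C [FC he sY]]]]]; have [c Cc] := filt_ne hFl FC.
  have [a Aa hac] := fsub C FC c Cc _ (ball_nbhd pE s e he).
  exists a; apply: sY; split => //; exists c, (a - c); split => //; split => //.
  by rewrite addrC subrK.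
have hH : na_convex_filter abs A H.
  split; first split.
  - split => //; exists [::], 1, cA; split; [done|exact: ltr01|by move=> x []].
  - by move=> X [].
  - by move=> /Hne [].
  - move=> X Y [XA [s1 [e1 [C1 [F1 he1 s1']]]]] [YA [s2 [e2 [C2 [F2 he2 s2']]]]]; split.
      by move=> x [/XA].
    exists (s1 ++ s2), (Num.min e1 e2), (C1 `&` C2); split; first exact: fI.
      by rewrite lt_min he1 he2.
    move=> x [Ax [c [w [[c1 c2] [hw ex]]]]]; have [hw1 hw2] := ball_cat _ _ _ _ _ _ hw.
    split; [apply: s1'|apply: s2']; (split; [done|exists c, w; done]).
  - move=> X Y [XA [s [e [C [FC he sX]]]]] XY YA; split => //; exists s, e, C; split => //.
    exact: subset_trans XY.
  - move=> X [XA [s [e [C [FC he sX]]]]].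
    have [C' [FC' cC'] C'C] := fC C FC.
    have [B [z [hB eC']]] := convex_cv cC'.
    have HY : H (A `&` splus C' (bl s e)).
      split; first by move=> x [].
      by exists s, e, C'; split.
    exists (A `&` splus C' (bl s e)); last first.
      move=> x [Ax [c [w [hc [hw ex]]]]]; apply: sX; split => //.
      by exists c, w; split => //; apply: C'C.
    split => //.
    have [y0 Y0] := Hne _ HY.
    rewrite eC' splus_cv in Y0 *; rewrite -(cv0 A) in Y0 *.
    apply: (cvI_convex _ _ _ _ y0 ha hAc _ Y0).
    by apply: acplus => //; apply: ball_abs.
have [H' [[hH' H'max] HH']] := zorn_cf A H hH.
have H'cauchy := hAp H' (conj hH' H'max).
have [[H'A H'sub H'0 H'I H'U] H'C] := hH'.
pose G := fun Y => Y `<=` cA /\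
  exists s e C X, [/\ Fl C, H' X, 0 < e & (C `&` splus X (bl s e)) `<=` Y].
have Gne : forall Y, G Y -> exists y, Y y.
  move=> Y [_ [s [e [C [X [FC HX he sY]]]]]].
  have HZ : H' (X `&` (A `&` splus C (bl s e))).
    apply: H'I => //; apply: HH'; split; first by move=> x [].
    by exists s, e, C; split.
  have [a [Xa [Aa [c [w [Cc [hw ea]]]]]]] := filt_ne (proj1 hH') HZ.
  exists c; apply: sY; split => //; exists a, (- w); split => //; split.
    exact: (ballN hs hw).
  by rewrite ea addrK.
have hG : na_convex_filter abs cA G.
  split; first split.
  - split => //; exists [::], 1, cA, A; split; [done|done|exact: ltr01|by move=> x []].
  - by move=> X [].
  - by move=> /Gne [].
  - move=> X Y [XA [s1 [e1 [C1 [X1 [F1 H1 he1 s1']]]]]] [YA [s2 [e2 [C2 [X2 [F2 H2 he2 s2']]]]]].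
    split; first by move=> x [/XA].
    exists (s1 ++ s2), (Num.min e1 e2), (C1 `&` C2), (X1 `&` X2); split.
    + exact: fI.
    + exact: H'I.
    + by rewrite lt_min he1 he2.
    move=> x [[c1 c2] [a [w [[x1 x2] [hw ex]]]]].
    have [hw1 hw2] := ball_cat _ _ _ _ _ _ hw.
    split; [apply: s1'|apply: s2']; (split; [done|exists a, w; done]).
  - move=> X Y [XA [s [e [C [X1 [FC HX he sX]]]]]] XY YA; split => //.
    exists s, e, C, X1; split => //; exact: subset_trans XY.
  - move=> Y [YA [s [e [C [X [FC HX he sY]]]]]].
    have [C' [FC' cC'] C'C] := fC C FC.
    have [B1 [z1 [hB1 eC']]] := convex_cv cC'.
    have [X' [HX' cX'] X'X] := H'C X HX.
    have [B2 [z2 [hB2 eX']]] := convex_cv cX'.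
    have GY : G (C' `&` splus X' (bl s e)).
      split; first by move=> x [/(fsub _ FC')].
      by exists s, e, C', X'; split.
    exists (C' `&` splus X' (bl s e)); last first.
      move=> x [Cx [a [w [ha' [hw ex]]]]]; apply: sY; split; first exact: C'C.
      by exists a, w; split => //; apply: X'X.
    split => //.
    have [y0 Y0] := Gne _ GY.
    rewrite eC' eX' splus_cv in Y0 *.
    apply: (cvI_convex _ _ _ _ y0 ha hB1 _ Y0).
    by apply: acplus => //; apply: ball_abs.
have FlG : Fl `<=` G.
  move=> C FC; split; first exact: fsub.
  exists [::], 1, C, A; split; [done|done|exact: ltr01|by move=> x []].
have eG := fmax G hG FlG.
move=> U /nbhd_ball [s [e [he sU]]].
have [X HX hX] := H'cauchy (bl s e) (ball_nbhd pE s e he).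
exists (cA `&` splus X (bl s e)).
  rewrite -eG; split; first by move=> x [].
  exists s, e, cA, X; split => //.
move=> _ _ [_ [x1 [w1 [X1 [hw1 ->]]]]] [_ [x2 [w2 [X2 [hw2 ->]]]]].
apply: sU; rewrite opprD addrACA; apply: (ballD hs (hX _ _ X1 X2)).
exact: (ballB hs hw1 hw2).
Qed.

Theorem mainTheorem1 (R : realType) (K : fieldType) (absK : K -> R)
  (hK1 : nonarch_abs absK) (hK2 : nontrivial_abs absK) (hK3 : complete_abs absK)
  (E F : lmodType K) (IE IF : Type)
  (pE : IE -> E -> R) (pF : IF -> F -> R)
  (hpE : forall i, nonarch_seminorm absK (pE i))
  (hpF : forall i, nonarch_seminorm absK (pF i))
  (A : set E) (hA : c_precompact absK pE A) :
  (forall f : {linear E -> F}, na_continuous pE pF f ->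
     c_precompact absK pF (f @` A)) /\
  c_precompact absK pE (na_closure pE A).
Proof.
have hsE : allsn absK pE by split.
split.
- by move=> f hf; exact: (part1 pE pF A hK1 hA f hf).
- exact: (part2 pE A hsE hA).
Qed.
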